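(* Let $A$ be a $p$-torsion free ring with a ring endomorphism $\phi$ satisfying $\phi(a)\equiv a^p\pmod{pA}$ for all $a\in A$. For every $a\in A$ and $n\ge1$: (i) $[a]=s_\phi(a)+Vs_\phi(\Delta_1(a))+\cdots+V^{n-1}s_\phi(\Delta_{n-1}(a))+V^n[\Delta_n(a)]$ in $W_{n+1}(A)$; (ii) $a^{p^n}=\sum_{s=0}^n p^s\phi^{n-s}(\Delta_s(a))$; (iii) $p^{n-1}\Delta_n(a)=\Delta_1(a^{p^{n-1}})$; (iv) for $n\ge2$, $\Delta_n(a)\equiv a^{p^n-p}\Delta_1(a)+a^{p^n-2p}\Delta_1(a)^p\pmod p$ if $p=2$, and $\Delta_n(a)\equiv a^{p^n-p}\Delta_1(a)\pmod p$ if $p$ is odd.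
   Context: $W(A)$, $W_n(A)$: $p$-typical Witt vectors (of length $n$), $[a]$ Teichmüller lift, $V$ Verschiebung, ghost components $\varphi_m(a_0,a_1,\dots)=\sum_{i=0}^mp^ia_i^{p^{m-i}}$. $s_\phi:A\to W(A)$ is the unique ring map with $\varphi_m(s_\phi(a))=\phi^m(a)$ for all $m$ (also composed with restriction to $W_n(A)$). Define $\Delta_{W_n}:W_n(A)\to W_{n-1}(A)$ by $V\Delta_{W_n}(\alpha)=\alpha-s_\phi(a_0)$ for $\alpha=(a_0,\dots,a_{n-1})$. Set $\Delta_0(a)=a$ and $\Delta_s(a)=\Delta_{W_2}\circ\cdots\circ\Delta_{W_{s+1}}([a])\in A$ for $s\ge1$; in particular $\Delta_1(a)=(a^p-\phi(a))/p$. *)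

(* Defs.v *)
From HB Require Import structures.
From mathcomp Require Import all_boot all_order all_algebra.
From Stdlib Require Import ClassicalEpsilon.

Set Implicit Arguments.
Unset Strict Implicit.
Unset Printing Implicit Defensive.

Import GRing.Theory.
Local Open Scope ring_scope.

(* A Witt vector (a_0, a_1, ...) is a sequence nat -> A; its image in W_n(A)
   is its truncation to the first n components. *)

Definition ghost (A : comPzRingType) (p : nat) (x : nat -> A) (m : nat) : A :=
  \sum_(i < m.+1) (p ^ i)%N%:R * x i ^+ (p ^ (m - i))%N.

Definition teich (A : comPzRingType) (a : A) : nat -> A :=
  fun i => if i is 0%N then a else 0.

Definition verschiebung (A : comPzRingType) (x : nat -> A) : nat -> A :=
  fun i => if i is j.+1 then x j else 0.

Definition wzero (A : comPzRingType) : nat -> A := fun _ => 0.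

(* Witt addition / subtraction: the (unique, for p-torsion-free A) Witt vector
   whose ghost components are the sums / differences of the ghost components. *)
Definition wadd (A : comPzRingType) (p : nat) (x y : nat -> A) : nat -> A :=
  epsilon (inhabits (wzero A))
    (fun z => forall m, ghost p z m = ghost p x m + ghost p y m).

Definition wsub (A : comPzRingType) (p : nat) (x y : nat -> A) : nat -> A :=
  epsilon (inhabits (wzero A))
    (fun z => forall m, ghost p z m = ghost p x m - ghost p y m).

Definition s_phi (A : comPzRingType) (p : nat) (phi : A -> A) (a : A) : nat -> A :=
  epsilon (inhabits (wzero A))
    (fun z => forall m, ghost p z m = iter m phi a).

(* Delta_{W}: V (DeltaW alpha) = alpha - s_phi(a_0). *)
Definition DeltaW (A : comPzRingType) (p : nat) (phi : A -> A) (x : nat -> A)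
  : nat -> A :=
  fun i => wsub p x (s_phi p phi (x 0%N)) i.+1.

(* Delta_s(a) = Delta_{W_2} o ... o Delta_{W_{s+1}} ([a]) in W_1(A) = A. *)
Definition Delta (A : comPzRingType) (p : nat) (phi : A -> A) (s : nat) (a : A) : A :=
  iter s (DeltaW p phi) (teich a) 0%N.

Definition weq_n (A : comPzRingType) (n : nat) (x y : nat -> A) : Prop :=
  forall i, (i < n)%N -> x i = y i.

(* Main.v *)
Require Import Defs.
From HB Require Import structures.
From mathcomp Require Import all_boot all_order all_algebra.
From mathcomp Require Import ring zify.
From Stdlib Require Import ClassicalEpsilon.
Import GRing.Theory.
Local Open Scope ring_scope.

Lemma pow3 w : (w.+3 <= 3 ^ w.+1)%N.
Proof. elim: w => [|w IH] //; rewrite expnS; lia. Qed.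
Lemma pow2 u : (u.+4 <= 2 ^ u.+2)%N.
Proof. elim: u => [|u IH] //; rewrite expnS; lia. Qed.

Lemma vbound p j v : prime p -> (2 <= j)%N -> (p ^ v <= j)%N -> (odd p || (3 <= j))%N ->
  (v + 2 <= j)%N.
Proof.
move=> hp hj hv ho.
have p2 := prime_gt1 hp.
case: v hv => [|w] hv; first lia.
have h2 : (2 ^ w.+1 <= p ^ w.+1)%N by rewrite leq_exp2r.
case/orP: ho => [hodd|h3].
  have p3 : (3 <= p)%N.
    case: p hp p2 hodd {hv h2} => [|[|[|]]] //.
  have : (3 ^ w.+1 <= p ^ w.+1)%N by rewrite leq_exp2r.
  have := pow3 w; lia.
case: w hv h2 => [|u] hv h2; first lia.
have := pow2 u; lia.
Qed.

Lemma binval p q j : prime p -> (1 <= q)%N -> (2 <= j)%N -> (j <= p ^ q)%N ->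
  (odd p || (3 <= j))%N -> (p ^ q.+2 %| 'C(p ^ q, j) * p ^ j)%N.
Proof.
move=> hp hq hj hjQ ho.
have Cpos : (0 < 'C(p ^ q, j))%N by rewrite bin_gt0.
have jpos : (0 < j)%N by lia.
have hCj : (p ^ q %| 'C(p ^ q, j) * j)%N.
  have e := mul_bin_diag (p ^ q) j.-1; rewrite prednK // in e; rewrite mulnC -e.
  exact: dvdn_mulr.
rewrite pfactor_dvdn // ?muln_gt0 ?Cpos ?expn_gt0 ?prime_gt0 // lognM // ?expn_gt0 ?prime_gt0 //.
rewrite pfactorK //.
move: hCj; rewrite pfactor_dvdn // ?muln_gt0 ?Cpos // lognM // => hq'.
have hv : (p ^ logn p j <= j)%N.
  apply: dvdn_leq => //; rewrite pfactor_dvdn //.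
have := vbound _ _ _ hp hj hv ho; lia.
Qed.
Lemma nat2 q : (1 <= q)%N -> (2 ^ q.+2 %| 2 ^ 2 * 'C(2 ^ q, 2) + 2 ^ q.+1)%N.
Proof.
move=> hq.
have e := mul_bin_diag (2 ^ q) 1; rewrite bin1 in e.
have t1 : (1 <= 2 ^ q)%N by rewrite expn_gt0.
have -> : (2 ^ 2 * 'C(2 ^ q, 2) + 2 ^ q.+1 = 2 ^ q.+2 * 2 ^ q.-1)%N.
  have -> : (2 ^ q.+2 * 2 ^ q.-1 = 2 * 2 ^ q * 2 ^ q)%N.
    by rewrite -expnS -!expnD; congr (expn _ _); lia.
  rewrite (expnS 2 q); move: e t1; set t := (2 ^ q)%N; set C := 'C(t, 2); nia.
exact: dvdn_mulr.
Qed.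

Section W.
Set Implicit Arguments.
Variables (A : comPzRingType) (p : nat) (phi : {rmorphism A -> A}).
Hypothesis hp : prime p.
Hypothesis htf : forall a : A, p%:R * a = 0 -> a = 0.
Hypothesis hfrob : forall a : A, exists b : A, phi a = a ^+ p + p%:R * b.

Definition pdv (k : nat) (y : A) := exists c, y = p%:R ^+ k * c.

Lemma pdv0 k : pdv k 0. Proof. by exists 0; rewrite mulr0. Qed.
Lemma pdvD k x y : pdv k x -> pdv k y -> pdv k (x + y).
Proof. by move=> [c ->] [d ->]; exists (c + d); rewrite mulrDr. Qed.
Lemma pdvN k x : pdv k x -> pdv k (- x).
Proof. by move=> [c ->]; exists (- c); rewrite mulrN. Qed.
Lemma pdvB k x y : pdv k x -> pdv k y -> pdv k (x - y).
Proof. by move=> hx hy; apply: pdvD => //; apply: pdvN. Qed.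
Lemma pdvMr k x y : pdv k x -> pdv k (x * y).
Proof. by move=> [c ->]; exists (c * y); rewrite mulrA. Qed.
Lemma pdvMl k x y : pdv k x -> pdv k (y * x).
Proof. by move=> h; rewrite mulrC; apply: pdvMr. Qed.
Lemma pdv_sum k n (F : 'I_n -> A) : (forall i, pdv k (F i)) -> pdv k (\sum_(i < n) F i).
Proof.
move=> h; elim/big_ind: _ => //; first exact: pdv0.
by move=> x y; apply: pdvD.
Qed.
Lemma pdv_le j k x : (j <= k)%N -> pdv k x -> pdv j x.
Proof.
move=> hjk [c ->]; exists (p%:R ^+ (k - j) * c).
by rewrite mulrA -exprD subnKC.
Qed.
Lemma pdvpM j k x : pdv k x -> pdv (j + k) (p%:R ^+ j * x).
Proof. by move=> [c ->]; exists c; rewrite mulrA exprD. Qed.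
Lemma pdvn k : pdv k ((p ^ k)%N%:R).
Proof. by exists 1; rewrite mulr1 natrX. Qed.

Lemma tf_exp k (x : A) : p%:R ^+ k * x = 0 -> x = 0.
Proof.
elim: k x => [|k IH] x; first by rewrite expr0 mul1r.
rewrite exprS -mulrA => /htf; exact: IH.
Qed.

Lemma tf_cancel k (x y : A) : p%:R ^+ k * x = p%:R ^+ k * y -> x = y.
Proof.
move=> h; apply/eqP; rewrite -subr_eq0; apply/eqP; apply: (@tf_exp k).
by rewrite mulrBr h subrr.
Qed.

Lemma congX1 x y i : pdv 1 (x - y) -> pdv 1 (x ^+ i - y ^+ i).
Proof. by move=> h; rewrite subrXX; apply: pdvMr. Qed.

Lemma congXp k x y : (1 <= k)%N -> pdv k (x - y) -> pdv k.+1 (x ^+ p - y ^+ p).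
Proof.
move=> hk hxy; rewrite subrXX.
have h1 : pdv 1 (\sum_(i < p) x ^+ (p.-1 - i) * y ^+ i).
  have -> : \sum_(i < p) x ^+ (p.-1 - i) * y ^+ i =
     \sum_(i < p) (x ^+ (p.-1 - i) - y ^+ (p.-1 - i)) * y ^+ i + p%:R * y ^+ p.-1.
    rewrite -[p%:R * _]/((p%:R * y ^+ p.-1)) .
    have -> : p%:R * y ^+ p.-1 = \sum_(i < p) y ^+ (p.-1 - i) * y ^+ i.
      rewrite (eq_bigr (fun _ => y ^+ p.-1)); last first.
        move=> i _; rewrite -exprD subnK //; have := ltn_ord i; lia.
      by rewrite sumr_const card_ord mulr_natl.
    rewrite -big_split /=; apply: eq_bigr => i _; ring.
  apply: pdvD; last by apply: pdvMr; exists 1; rewrite expr1 mulr1.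
  apply: pdv_sum => i; apply: pdvMr; apply: congX1.
  have := @pdv_le 1 k (x - y) hk hxy. exact.
case: hxy => c ->; case: h1 => d ->; exists (c * d).
rewrite [p%:R ^+ k.+1]exprSr; move: (p%:R ^+ k) => P; ring.
Qed.

Lemma congXpj k j x y : (1 <= k)%N -> pdv k (x - y) ->
  pdv (k + j) (x ^+ (p ^ j) - y ^+ (p ^ j)).
Proof.
move=> hk h; elim: j => [|j IH]; first by rewrite addn0 expn0 !expr1.
rewrite addnS expnSr !exprM; apply: congXp => //; lia.
Qed.

Lemma frobj y j : pdv j.+1 (phi (y ^+ (p ^ j)) - y ^+ (p ^ j.+1)).
Proof.
rewrite rmorphXn expnS exprM.
have [b hb] := hfrob y.
have := @congXpj 1 j (phi y) (y ^+ p) (leqnn 1); rewrite add1n; apply.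
by rewrite hb; exists b; rewrite expr1; ring.
Qed.


Notation gh := (@ghost A p).

Lemma ghost_split x m : gh x m =
  \sum_(i < m) (p ^ i)%N%:R * x i ^+ (p ^ (m - i))%N + (p ^ m)%N%:R * x m.
Proof. by rewrite /ghost big_ord_recr /= subnn expn0 expr1. Qed.

Lemma ghost_ext x y m : (forall i, (i <= m)%N -> x i = y i) -> gh x m = gh y m.
Proof.
move=> h; apply: eq_bigr => i _; rewrite h //; have := ltn_ord i; lia.
Qed.

Lemma ghost_inj N x y : (forall m, (m <= N)%N -> gh x m = gh y m) ->
  forall i, (i <= N)%N -> x i = y i.
Proof.
move=> h.
suff: forall i, (i <= N.+1)%N -> forall j, (j < i)%N -> x j = y j.
  by move=> H i hi; apply: (H i.+1).
elim=> [|i IH] hi j hj; first by [].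
have IH' := IH (ltnW hi).
rewrite ltnS leq_eqVlt in hj; case/orP: hj => [/eqP ->|hj]; last exact: IH'.
have := h i (hi : (i < N.+1)%N); rewrite !ghost_split.
rewrite (eq_bigr (fun k : 'I_i => (p ^ k)%N%:R * y k ^+ (p ^ (i - k))%N)); last first.
  by move=> k _; rewrite IH'.
move/addrI; rewrite natrX; exact: tf_cancel.
Qed.

Lemma dwork_fwd x m : pdv m.+1 (gh x m.+1 - phi (gh x m)).
Proof.
rewrite ghost_split /ghost rmorph_sum /=.
have -> : forall a b c : A, a + b - c = (a - c) + b by move=> a b c; ring.
apply: pdvD; last by rewrite natrX; exists (x m.+1).
rewrite -sumrB; apply: pdv_sum => i.
rewrite rmorphM rmorph_nat -mulrBr natrX.
have hi : (i <= m)%N by have := ltn_ord i; lia.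
apply: (@pdv_le _ (i + (m - i).+1)); first lia.
apply: pdvpM; rewrite -opprB; apply: pdvN.
have -> : (m.+1 - i = (m - i).+1)%N by lia.
exact: frobj.
Qed.

Lemma dwork_step w : (forall m, pdv m.+1 (w m.+1 - phi (w m))) ->
  forall N, exists x, forall m, (m < N)%N -> gh x m = w m.
Proof.
move=> hw; elim=> [|N [x hx]]; first by exists (wzero A).
have hd : pdv N (w N - \sum_(i < N) (p ^ i)%N%:R * x i ^+ (p ^ (N - i))%N).
  case: N hx => [|k] hx; first by exists (w 0%N); rewrite big_ord0 subr0 expr0 mul1r.
  have e : w k.+1 - \sum_(i < k.+1) (p ^ i)%N%:R * x i ^+ (p ^ (k.+1 - i))%N =
    (w k.+1 - phi (w k)) - (gh x k.+1 - phi (gh x k)) + (p ^ k.+1)%N%:R * x k.+1.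
    rewrite (hx k (ltnSn k)) [gh x k.+1]ghost_split; ring.
  rewrite e; apply: pdvD; first apply: pdvB => //; first exact: dwork_fwd.
  by apply: pdvMr; apply: pdvn.
case: hd => c hc.
exists (fun i => if i == N then c else x i) => m hm.
rewrite ltnS leq_eqVlt in hm; case/orP: hm => [/eqP ->|hm].
  rewrite ghost_split eqxx.
  rewrite (eq_bigr (fun k : 'I_N => (p ^ k)%N%:R * x k ^+ (p ^ (N - k))%N)); last first.
    by move=> k _; rewrite ifN // neq_ltn ltn_ord.
  by rewrite natrX -hc addrC subrK.
rewrite -(hx m hm); apply: ghost_ext => i hi; rewrite ifN //; rewrite neq_ltn; apply/orP; left; lia.
Qed.

Lemma dwork w : (forall m, pdv m.+1 (w m.+1 - phi (w m))) ->
  exists x, forall m, gh x m = w m.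
Proof.
move=> hw.
pose f N := proj1_sig (constructive_indefinite_description _ (@dwork_step w hw N.+1)).
have hf N m : (m <= N)%N -> gh (f N) m = w m.
  move=> hm; rewrite /f; case: (constructive_indefinite_description _ _) => /= x hx.
  exact: hx.
exists (fun i => f i i) => m.
rewrite -(hf m m (leqnn m)); apply: ghost_ext => i hi.
apply: (@ghost_inj i) => // j hj; rewrite hf // hf //; lia.
Qed.

Lemma wadd_ghost x y m : gh (wadd p x y) m = gh x m + gh y m.
Proof.
rewrite /wadd; move: m; apply: (epsilon_spec (inhabits (wzero A)) (fun z => forall m, gh z m = gh x m + gh y m)); apply: dwork => m.
rewrite rmorphD; have -> : forall a b c d : A, a + b - (c + d) = (a - c) + (b - d)
  by move=> a b c d; ring.
by apply: pdvD; apply: dwork_fwd.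
Qed.

Lemma wsub_ghost x y m : gh (wsub p x y) m = gh x m - gh y m.
Proof.
rewrite /wsub; move: m; apply: (epsilon_spec (inhabits (wzero A)) (fun z => forall m, gh z m = gh x m - gh y m)); apply: dwork => m.
rewrite rmorphB; have -> : forall a b c d : A, a - b - (c - d) = (a - c) - (b - d)
  by move=> a b c d; ring.
by apply: pdvB; apply: dwork_fwd.
Qed.

Lemma s_phi_ghost a m : gh (s_phi p phi a) m = iter m phi a.
Proof.
rewrite /s_phi; move: m; apply: (epsilon_spec (inhabits (wzero A)) (fun z => forall m, gh z m = iter m phi a)); apply: dwork => m.
by rewrite iterS subrr; apply: pdv0.
Qed.

Lemma ghost0 x : gh x 0 = x 0%N.
Proof. by rewrite /ghost big_ord1 /= expn0 expr1 mul1r. Qed.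

Lemma ghost_teich a m : gh (teich a) m = a ^+ (p ^ m)%N.
Proof.
rewrite /ghost big_ord_recl /= expn0 mul1r subn0 big1 ?addr0 // => i _.
rewrite /= expr0n; have -> : (p ^ (m - bump 0 i) == 0)%N = false.
  by rewrite expn_eq0; move: (prime_gt0 hp); lia.
by rewrite mulr0.
Qed.

Lemma ghost_zero m : gh (wzero A) m = 0.
Proof.
apply: big1 => i _; rewrite /wzero expr0n.
have -> : (p ^ (m - i) == 0)%N = false by rewrite expn_eq0; move: (prime_gt0 hp); lia.
by rewrite mulr0.
Qed.

Lemma ghost_V0 x : gh (verschiebung x) 0 = 0.
Proof. by rewrite ghost0. Qed.

Lemma ghost_VS x m : gh (verschiebung x) m.+1 = p%:R * gh x m.
Proof.
rewrite /ghost big_ord_recl /= expr0n.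
have -> : (p ^ (m.+1 - 0) == 0)%N = false by rewrite expn_eq0; move: (prime_gt0 hp); lia.
rewrite mulr0 add0r mulr_sumr; apply: eq_bigr => i _.
by rewrite /bump /= add1n subSS expnS natrM mulrA.
Qed.

Lemma ghost_DeltaW x m :
  p%:R * gh (DeltaW p phi x) m = gh x m.+1 - iter m.+1 phi (x 0%N).
Proof.
set z := wsub p x (s_phi p phi (x 0%N)).
have hz0 : z 0%N = 0 by rewrite -ghost0 wsub_ghost ghost0 s_phi_ghost /= subrr.
have : gh (verschiebung (DeltaW p phi x)) m.+1 = gh z m.+1.
  by apply: ghost_ext => -[|i] _ //=.
by rewrite ghost_VS => ->; rewrite wsub_ghost s_phi_ghost.
Qed.

Definition DD a k := iter k (DeltaW p phi) (teich a).

Lemma key a k m : a ^+ (p ^ (k + m))%N =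
  \sum_(s < k) (p ^ s)%N%:R * iter (k + m - s) phi (Delta p phi s a)
  + (p ^ k)%N%:R * gh (DD a k) m.
Proof.
elim: k m => [|k IH] m.
  by rewrite big_ord0 add0r expn0 mul1r add0n /DD /= ghost_teich.
have hD := ghost_DeltaW (DD a k) m.
rewrite -/(DD a k.+1) in hD.
rewrite addSnnS IH big_ord_recr /=.
rewrite (eq_bigr (fun s : 'I_k => (p ^ s)%N%:R * iter (k.+1 + m - s) phi (Delta p phi s a))); last first.
  by move=> s _; rewrite addSnnS.
have -> : (k + m.+1 - k = m.+1)%N by lia.
rewrite -addrA; congr (_ + _).
rewrite expnS natrM mulrAC hD /Delta -/(DD a k).
move: (gh (DD a k) m.+1) (iter m.+1 phi (DD a k 0%N)) => u v; ring.
Qed.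

Lemma part2 a n : a ^+ (p ^ n)%N =
  \sum_(s < n.+1) (p ^ s)%N%:R * iter (n - s) phi (Delta p phi s a).
Proof.
rewrite -[n in (p ^ n)%N]addn0 key big_ord_recr /= subnn ghost0.
congr (_ + _); apply: eq_bigr => s _; by rewrite addn0.
Qed.

Lemma delta1 b : p%:R * Delta p phi 1 b = b ^+ p - phi b.
Proof.
have := key b 1 0; rewrite big_ord1 /= expn0 mul1r expn1 ghost0 => ->.
rewrite /Delta /DD /=; ring.
Qed.

Lemma phi_ghostlike a q : phi (a ^+ (p ^ q)%N) =
  \sum_(s < q.+1) (p ^ s)%N%:R * iter (q.+1 - s) phi (Delta p phi s a).
Proof.
rewrite {1}part2 rmorph_sum; apply: eq_bigr => s _.
rewrite rmorphM rmorph_nat; have -> : (q.+1 - s = (q - s).+1)%N.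
  by have := ltn_ord s; lia.
by [].
Qed.

Lemma part3 a q : (p ^ q)%N%:R * Delta p phi q.+1 a = Delta p phi 1 (a ^+ (p ^ q)%N).
Proof.
apply: (@tf_cancel 1); rewrite expr1 delta1 -exprM -expnSr.
have := key a q.+1 0; rewrite addn0 => ->.
rewrite phi_ghostlike ghost0.
rewrite expnS natrM /Delta /DD; ring.
Qed.

Lemma ghost_iterV i x m : gh (iter i (@verschiebung A) x) m =
  if (i <= m)%N then (p ^ i)%N%:R * gh x (m - i) else 0.
Proof.
elim: i m => [|i IH] m; first by rewrite /= expn0 mul1r subn0.
case: m => [|m]; first by rewrite iterS ghost_V0.
rewrite iterS ghost_VS IH ltnS subSS; case: ifP => _; last by rewrite mulr0.
by rewrite expnS natrM mulrA.
Qed.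

Lemma ghost_bigw n (F : 'I_n -> nat -> A) m :
  gh (\big[wadd p/wzero A]_(i < n) F i) m = \sum_(i < n) gh (F i) m.
Proof.
elim: n F => [|n IH] F; first by rewrite !big_ord0 ghost_zero.
by rewrite !big_ord_recl wadd_ghost IH.
Qed.

Lemma part1 a n : weq_n n.+1 (teich a)
    (wadd p (\big[wadd p/wzero A]_(i < n)
               iter i (@verschiebung A) (s_phi p phi (Delta p phi i a)))
            (iter n (@verschiebung A) (teich (Delta p phi n a)))).
Proof.
move=> i hi; apply: (@ghost_inj n) => // m hm.
rewrite wadd_ghost ghost_bigw ghost_teich ghost_iterV.
under eq_bigr => j _ do rewrite ghost_iterV s_phi_ghost.
rewrite leq_eqVlt in hm; case/orP: hm => [/eqP ->|hm].
  rewrite leqnn subnn ghost_teich expn0 expr1 (part2 a n) big_ord_recr /= subnn.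
  congr (_ + _); apply: eq_bigr => j _; by rewrite ifT // ltnW.
rewrite leqNgt hm addr0 -big_mkcond /=.
rewrite (part2 a m) (big_ord_widen n (fun j => (p ^ j)%N%:R * iter (m - j) phi (Delta p phi j a)) hm).
by [].
Qed.

Lemma pdv_nat k (m : nat) (z : A) : (p ^ k %| m)%N -> pdv k (z *+ m).
Proof.
case/dvdnP=> e ->; exists (z *+ e).
by rewrite mulrnA -[_ *+ (p ^ k)%N]mulr_natr natrX mulrC.
Qed.

Lemma Yterm (W d : A) j C :
  W * (- (p%:R * d)) ^+ j *+ C = (W * (- d) ^+ j) *+ (C * p ^ j).
Proof.
by rewrite -mulrN exprMn -natrX mulr_natl mulrnAr -mulrnA mulnC.
Qed.

Lemma exp3 (X Y : A) Q : (2 <= Q)%N -> (X + Y) ^+ Q =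
  X ^+ Q + X ^+ Q.-1 * Y *+ Q + X ^+ (Q - 2) * Y ^+ 2 *+ 'C(Q, 2)
  + \sum_(i < Q - 2) X ^+ (Q - i.+3) * Y ^+ i.+3 *+ 'C(Q, i.+3).
Proof.
move=> hQ; have [N ->] : exists N, Q = N.+2 by exists (Q - 2)%N; lia.
rewrite exprDn !big_ord_recl /= /bump /= !add1n.
rewrite !subSS !subn0 expr0 mulr1 bin0 mulr1n.
rewrite expr1 bin1 !addrA; congr (_ + _); apply: eq_bigr => i _; by rewrite !add1n.
Qed.

Lemma part4 a q : (1 <= q)%N ->
  (p = 2%N -> exists b : A,
     Delta p phi q.+1 a = a ^+ (p ^ q.+1 - p)%N * Delta p phi 1 a
                       + a ^+ (p ^ q.+1 - 2 * p)%N * (Delta p phi 1 a) ^+ p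
                       + p%:R * b)
  /\ (odd p -> exists b : A,
     Delta p phi q.+1 a = a ^+ (p ^ q.+1 - p)%N * Delta p phi 1 a + p%:R * b).
Proof.
move=> hq.
have p1 := prime_gt1 hp.
have hQ2 : (2 <= p ^ q)%N.
  have := leq_pexp2l (prime_gt0 hp) hq; rewrite expn1; lia.
have ex1 : a ^+ (p ^ q.+1 - p)%N = (a ^+ p) ^+ (p ^ q)%N.-1.
  by rewrite -exprM expnS -subn1 mulnBr muln1.
have ex2 : a ^+ (p ^ q.+1 - 2 * p)%N = (a ^+ p) ^+ (p ^ q - 2)%N.
  by rewrite -exprM expnS mulnBr (mulnC p 2).
rewrite ex1 ex2.
have e1 : p%:R * ((p ^ q)%N%:R * Delta p phi q.+1 a) =
    (a ^+ p) ^+ (p ^ q)%N - (phi a) ^+ (p ^ q)%N.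
  by rewrite part3 delta1 rmorphXn -exprM mulnC exprM.
have hphi : phi a = a ^+ p + - (p%:R * Delta p phi 1 a).
  by rewrite delta1 opprB addrC subrK.
rewrite hphi exp3 // in e1.
set d := Delta p phi 1 a in e1 *.
set Dn := Delta p phi q.+1 a in e1 *.
set X := a ^+ p in e1 *.
set Q := (p ^ q)%N in e1 hQ2 *.
set Y := - (p%:R * d) in e1.
set Rest := \sum_(i < Q - 2) _ in e1.
set T2 := X ^+ (Q - 2) * Y ^+ 2 *+ 'C(Q, 2) in e1.
have [E hE] : pdv q.+2 Rest.
  apply: pdv_sum => i; rewrite Yterm; apply: pdv_nat.
  apply: binval => //; try (by have := ltn_ord i; rewrite /Q; lia).
have e2 : p%:R * (Q%:R * Dn) = Q%:R * (p%:R * X ^+ Q.-1 * d) - T2 - Rest.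
  rewrite e1 /Y -mulr_natr; move: (X ^+ Q) (X ^+ Q.-1) => XQ X1; ring.
split.
- move=> p2.
  have [E2 hE2] : pdv q.+2 (T2 + (X ^+ (Q - 2) * d ^+ 2) *+ (p ^ q.+1)%N).
    rewrite /T2 /Y Yterm sqrrN -mulrnDr; apply: pdv_nat.
    by rewrite /Q p2 mulnC; exact: nat2.
  have hT2 : T2 = p%:R ^+ q.+2 * E2 - (X ^+ (Q - 2) * d ^+ 2) *+ (p ^ q.+1)%N.
    by rewrite -hE2 addrK.
  exists (- (E + E2)).
  apply: (@tf_cancel q); apply: (@tf_cancel 1).
  have hQR : (Q%:R : A) = p%:R ^+ q by rewrite natrX.
  rewrite !expr1 -natrX -/Q e2 hT2 hE hQR p2.
  rewrite -[_ *+ (2 ^ q.+1)%N]mulr_natr natrX !exprS; move: (2%:R ^+ q : A) => P.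
  move: (X ^+ Q.-1) (X ^+ (Q - 2)) => X1 X2; ring.
- move=> hodd.
  have [E2 hE2] : pdv q.+2 T2.
    rewrite /T2 /Y Yterm; apply: pdv_nat.
    by apply: binval => //; rewrite hodd.
  exists (- (E + E2)).
  apply: (@tf_cancel q); apply: (@tf_cancel 1).
  rewrite !expr1 -natrX -/Q e2 hE2 hE natrX.
  rewrite !exprS; move: (p%:R ^+ q : A) => P.
  move: (X ^+ Q.-1) => X1; ring.
Qed.

End W.

Theorem theorem3p6 (A : comPzRingType) (p : nat) (phi : {rmorphism A -> A})
  (hp : prime p)
  (htf : forall a : A, p%:R * a = 0 -> a = 0)
  (hfrob : forall a : A, exists b : A, phi a = a ^+ p + p%:R * b)
  (a : A) (n : nat) (hn : (1 <= n)%N) :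
  weq_n n.+1 (teich a)
    (wadd p (\big[wadd p/wzero A]_(i < n)
               iter i (@verschiebung A) (s_phi p phi (Delta p phi i a)))
            (iter n (@verschiebung A) (teich (Delta p phi n a))))
  /\ a ^+ (p ^ n)%N = \sum_(s < n.+1) (p ^ s)%N%:R * iter (n - s) phi (Delta p phi s a)
  /\ (p ^ n.-1)%N%:R * Delta p phi n a = Delta p phi 1 (a ^+ (p ^ n.-1)%N)
  /\ ((2 <= n)%N ->
      (p = 2%N -> exists b : A,
         Delta p phi n a = a ^+ (p ^ n - p)%N * Delta p phi 1 a
                           + a ^+ (p ^ n - 2 * p)%N * (Delta p phi 1 a) ^+ p
                           + p%:R * b)
      /\ (odd p -> exists b : A,
         Delta p phi n a = a ^+ (p ^ n - p)%N * Delta p phi 1 a + p%:R * b)).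
Proof.
split; first exact: (@part1 A p phi hp htf hfrob a n).
split; first exact: (@part2 A p phi hp htf hfrob a n).
have [q ->] : exists q, n = q.+1 by exists n.-1; rewrite prednK.
split; first exact: (@part3 A p phi hp htf hfrob a q).
move=> hq; exact: (@part4 A p phi hp htf hfrob a q hq).
Qed.
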